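(* Let ${\mathcal B}$ be a finite family of nonzero elements of $L$. Then ${\mathcal B}$ is $w_S$-reduced if and only if for every $\rho\in\{w_S(b)+\mathbb Z: b\in{\mathcal B}\}$ the family $$\big(\operatorname{red}^{w_S(b)}_S(b)\big)_{b\in{\mathcal B},\ w_S(b)+\mathbb Z=\rho}$$ of elements of $k_{\mathfrak P_1}\times\cdots\times k_{\mathfrak P_s}$ is linearly independent over $k_\mathfrak p$.
   Context: Let $A$ be a Dedekind domain with fraction field $K$, $\mathfrak p$ a nonzero prime ideal with valuation $v_\mathfrak p$, $\pi\in\mathfrak p$ with $v_\mathfrak p(\pi)=1$, $k_\mathfrak p=A/\mathfrak p$. Let $f\in A[x]$ be monic irreducible separable, $\theta$ a root, $L=K(\theta)$, $\mathcal O$ the integral closure of $A$ in $L$, and $S=\{\mathfrak P_1,\dots,\mathfrak P_s\}$ the set of all primes of $\mathcal O$ over $\mathfrak p$, with ramification indices $e_i$, normalized valuations $v_{\mathfrak P_i}$, valuation rings $\mathcal O_{(\mathfrak P_i)}$, residue fields $k_{\mathfrak P_i}$, fixed elements $\pi_{\mathfrak P_i}$ with $v_{\mathfrak P_i}(\pi_{\mathfrak P_i})=1$; $w_{\mathfrak P_i}=v_{\mathfrak P_i}/e_i$ and $w_S(z)=\min_i w_{\mathfrak P_i}(z)$. For a prime $\mathfrak P$ with ramification $e$, $r\in\mathbb Q$ and $z\in L$ with $w_\mathfrak P(z)\ge r$, $\operatorname{red}^r_\mathfrak P(z)\in k_\mathfrak P$ is $0$ if $w_\mathfrak P(z)>r$,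 and if $w_\mathfrak P(z)=r$ (so $er\in\mathbb Z$, $er=qe+m$, $0\le m<e$) it is the residue of $z\pi^{-q}\pi_\mathfrak P^{-m}$. For $z$ with $w_S(z)\ge r$, $\operatorname{red}^r_S(z):=(\operatorname{red}^r_{\mathfrak P_i}(z))_{1\le i\le s}$. A finite family ${\mathcal B}\subset L$ is $w$-reduced if $w(\sum_b\lambda_bb)=\min_bw(\lambda_bb)$ for all $\lambda_b\in K$. *)

(* Defs.v *)
(* Abstract valued-field rendering of the Dedekind setting. *)
From HB Require Import structures.
From mathcomp Require Import all_boot all_order all_algebra all_field.
Set Implicit Arguments. Unset Strict Implicit. Unset Printing Implicit Defensive.
Import Order.TTheory GRing.Theory Num.Theory.
Local Open Scope ring_scope.

(* A normalized discrete valuation v : F^* ->> Z (its value at 0 is irrelevant,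
   0 is treated as having valuation +oo everywhere below). *)
Definition is_dvaluation (F : fieldType) (v : F -> int) : Prop :=
  [/\ forall x y, x != 0 -> y != 0 -> v (x * y) = v x + v y,
      forall x y, x != 0 -> y != 0 -> x + y != 0 ->
        Num.min (v x) (v y) <= v (x + y)
    & exists x, x != 0 /\ v x = 1].

Definition vring (F : fieldType) (v : F -> int) (x : F) : bool :=
  (x == 0) || (0 <= v x).

(* r : F -> k restricted to the valuation ring of v is the residue map onto
   the residue field k (surjective ring morphism with kernel the maximal ideal). *)
Definition is_residue_map (F : fieldType) (v : F -> int) (k : fieldType)
    (r : F -> k) : Prop :=
  [/\ forall x y, vring v x -> vring v y -> r (x + y) = r x + r y,
      forall x y, vring v x -> vring v y -> r (x * y) = r x * r y,
      r 1 = 1,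
      forall x, vring v x -> (r x == 0) = (x == 0) || (0 < v x)
    & forall y, exists x, vring v x /\ r x = y].

Definition wval (F : fieldType) (e : nat) (v : F -> int) (z : F) : rat :=
  (v z)%:~R / (e%:R).

Definition minl (l : seq rat) : rat := foldr Num.min (head 0 l) l.

Definition wS (F : fieldType) (s : nat) (e : 'I_s -> nat) (v : 'I_s -> F -> int)
    (z : F) : rat :=
  minl [seq wval (e i) (v i) z | i <- enum 'I_s].

Definition redP (K : fieldType) (L : fieldExtType K) (k : fieldType)
    (res : L -> k) (e : nat) (v : L -> int) (pi : K) (piP : L)
    (r : rat) (z : L) : k :=
  if (z != 0) && (wval e v z == r) then
    let q := (v z %/ e%:Z)%Z in
    let m := (v z %% e%:Z)%Z in
    res (z * (pi%:A) ^ (- q) * piP ^ (- m))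
  else 0.

(* A finite family b of nonzero elements is w-reduced:
   w(sum lam_b b) = min_b w(lam_b b) for all lam, with w(0) = +oo. *)
Definition w_reduced (K : fieldType) (L : fieldExtType K) (w : L -> rat)
    (n : nat) (b : 'I_n -> L) : Prop :=
  forall lam : 'I_n -> K, (exists j, lam j != 0) ->
    (\sum_(j < n) lam j *: b j != 0) /\
    w (\sum_(j < n) lam j *: b j) =
      minl [seq w (lam j *: b j) | j <- enum 'I_n & lam j != 0].

(* The subfamily (x j)_{j in J} of prod_i k_i is linearly independent over kp,
   where kp acts on k_i through iota i. *)
Definition prod_lin_indep (kp : fieldType) (s : nat) (k : 'I_s -> fieldType)
    (iota : forall i, kp -> k i) (n : nat) (J : pred 'I_n)
    (x : 'I_n -> forall i, k i) : Prop :=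
  forall mu : 'I_n -> kp,
    (forall i, \sum_(j < n | J j) iota i (mu j) * x j i = 0) ->
    forall j, J j -> mu j = 0.

(* Main.v *)
Require Import Defs.
From HB Require Import structures.
From mathcomp Require Import all_boot all_order all_algebra all_field.
From mathcomp Require Import lra.
Import Order.TTheory GRing.Theory Num.Theory.
Set Implicit Arguments. Unset Strict Implicit. Unset Printing Implicit Defensive.
Local Open Scope ring_scope.

Section Val.
Variables (F : fieldType) (v : F -> int) (hv : is_dvaluation v).

Lemma vM x y : x != 0 -> y != 0 -> v (x * y) = v x + v y.
Proof. by move: hv; rewrite /is_dvaluation; case=> *; auto. Qed.

Lemma vD x y : x != 0 -> y != 0 -> x + y != 0 -> Num.min (v x) (v y) <= v (x + y).
Proof. by move: hv; rewrite /is_dvaluation; case=> *; auto. Qed.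

Lemma v1 : v 1 = 0.
Proof. have := vM (oner_neq0 F) (oner_neq0 F); rewrite mulr1 => h.
by move: (congr1 (fun t => t - v 1) h); rewrite addrK subrr => <-. Qed.

Lemma vN1 : v (-1) = 0.
Proof.
have h1 : (-1 : F) != 0 by rewrite oppr_eq0 oner_neq0.
have := vM h1 h1; rewrite mulrNN mulr1 v1 => h.
have : (2 : int) * v (-1) = 0 by rewrite h mulr2n mulrDl mul1r.
by move/eqP; rewrite mulf_eq0 => /orP[//|/eqP->].
Qed.

Lemma vN x : x != 0 -> v (- x) = v x.
Proof. move=> hx; have h1 : (-1 : F) != 0 by rewrite oppr_eq0 oner_neq0.
by rewrite -mulN1r (vM h1 hx) vN1 add0r. Qed.

Lemma vV x : x != 0 -> v (x^-1) = - v x.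
Proof. move=> hx; have := vM hx (invr_neq0 hx); rewrite mulfV // v1 => h.
by apply: (addrI (v x)); rewrite -h subrr. Qed.

Lemma vXn x n : x != 0 -> v (x ^+ n) = (n%:Z) * v x.
Proof. move=> hx; elim: n => [|n IH]; first by rewrite expr0 v1 mul0r.
rewrite exprS vM ?expf_neq0 // IH -[n.+1]addn1 PoszD mulrDl mul1r addrC //. Qed.

Lemma vXz x (z : int) : x != 0 -> v (x ^ z) = z * v x.
Proof. move=> hx; case: z => n; first by rewrite -exprnP vXn.
by rewrite /exprz vV ?expf_neq0 // vXn // NegzE mulNr. Qed.

Lemma vMn0 x y : x * y != 0 -> v (x * y) = v x + v y.
Proof. by rewrite mulf_eq0 negb_or => /andP[hx hy]; rewrite vM. Qed.

End Val.

Section W.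
Variables (F : fieldType) (v : F -> int) (hv : is_dvaluation v) (e : nat) (he : (0 < e)%N).

Let ep : 0 < (e%:R : rat)^-1. Proof. by rewrite invr_gt0 ltr0n. Qed.

Lemma wval_le x y : (wval e v x <= wval e v y) = (v x <= v y).
Proof. by rewrite /wval ler_pM2r // ler_int. Qed.
Lemma wval_lt x y : (wval e v x < wval e v y) = (v x < v y).
Proof. by rewrite /wval ltr_pM2r // ltr_int. Qed.
Lemma wval_eq x y : (wval e v x == wval e v y) = (v x == v y).
Proof. by rewrite eq_le !wval_le -eq_le. Qed.

Definition geW r z := (z == 0) || (r <= wval e v z).
Definition gtW r z := (z == 0) || (r < wval e v z).

Lemma wvalD x y : x != 0 -> y != 0 -> x + y != 0 ->
  Num.min (wval e v x) (wval e v y) <= wval e v (x + y).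
Proof. move=> hx hy hxy; have := vD hv hx hy hxy.
by rewrite !ge_min !wval_le. Qed.

Lemma geW_add r x y : geW r x -> geW r y -> geW r (x + y).
Proof.
rewrite /geW; case: (eqVneq x 0) => [->|hx]; first by move=> _ h; rewrite add0r.
case: (eqVneq y 0) => [->|hy]; first by move=> h _; rewrite addr0 (negbTE hx).
case: (eqVneq (x + y) 0) => [//|hxy] /= h1 h2.
apply: le_trans (wvalD hx hy hxy); by rewrite le_min h1 h2.
Qed.

Lemma gtW_add r x y : gtW r x -> gtW r y -> gtW r (x + y).
Proof.
rewrite /gtW; case: (eqVneq x 0) => [->|hx]; first by move=> _ h; rewrite add0r.
case: (eqVneq y 0) => [->|hy]; first by move=> h _; rewrite addr0 (negbTE hx).
case: (eqVneq (x + y) 0) => [//|hxy] /= h1 h2.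
apply: lt_le_trans (wvalD hx hy hxy); by rewrite lt_min h1 h2.
Qed.

Lemma geW_sum r (I : Type) (l : seq I) (P : pred I) (f : I -> F) :
  (forall i, P i -> geW r (f i)) -> geW r (\sum_(i <- l | P i) f i).
Proof. move=> h; apply: (big_ind (geW r)) => //; first by rewrite /geW eqxx.
exact: geW_add. Qed.

Lemma gtW_sum r (I : Type) (l : seq I) (P : pred I) (f : I -> F) :
  (forall i, P i -> gtW r (f i)) -> gtW r (\sum_(i <- l | P i) f i).
Proof. move=> h; apply: (big_ind (gtW r)) => //; first by rewrite /gtW eqxx.
exact: gtW_add. Qed.

Lemma wval_N x : x != 0 -> wval e v (- x) = wval e v x.
Proof. by move=> hx; rewrite /wval vN. Qed.

Lemma wval_dom m x y : x != 0 -> wval e v x = m -> gtW m y ->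
  x + y != 0 /\ wval e v (x + y) = m.
Proof.
move=> hx hm; rewrite /gtW; case: (eqVneq y 0) => [->|hy /=]; first by move=> _; rewrite addr0.
move=> hlt.
have hxy : x + y != 0.
  apply/eqP => h; have : y = - x by apply/eqP; rewrite -(subr_eq0) opprK addrC h.
  by move=> hyx; move: hlt; rewrite hyx wval_N // hm ltxx.
split=> //.
have h1 : m <= wval e v (x + y).
  by apply: le_trans (wvalD hx hy hxy); rewrite le_min hm lexx ltW.
apply/eqP; rewrite eq_le h1 andbT; rewrite leNgt; apply/negP => h2.
have hmy : - y != 0 by rewrite oppr_eq0.
have hx' : x = (x + y) + - y by rewrite addrK.
have := wvalD hxy hmy; rewrite -hx' hm => /(_ hx).
by rewrite wval_N // ge_min leNgt h2 /= leNgt hlt.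
Qed.

End W.

Lemma foldr_min_le (d : rat) (l : seq rat) x : x \in d :: l -> foldr Num.min d l <= x.
Proof.
elim: l => [|y l IH] /=; first by rewrite inE => /eqP->.
rewrite !inE => /orP[hx|/orP[/eqP->|h]].
- by rewrite ge_min; apply/orP; right; apply: IH; rewrite inE hx.
- by rewrite ge_min lexx.
- by rewrite ge_min; apply/orP; right; apply: IH; rewrite inE h orbT.
Qed.

Lemma foldr_min_in (d : rat) (l : seq rat) : foldr Num.min d l \in d :: l.
Proof.
elim: l => [|y l IH] /=; first by rewrite mem_head.
rewrite /Num.min; case: ifP => _; first by rewrite !inE eqxx orbT.
by move: IH; rewrite !inE => /orP[->|->]; rewrite ?orbT.
Qed.

Lemma minl_le l x : x \in l -> minl l <= x.
Proof. case: l => [//|y l] h; change (foldr Num.min y (y :: l) <= x); apply: foldr_min_le.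
by rewrite inE h orbT. Qed.

Lemma minl_in l : l != [::] -> minl l \in l.
Proof. case: l => [//|y l] _; change (foldr Num.min y (y :: l) \in y :: l).
move: (foldr_min_in y (y :: l)); rewrite [in X in X -> _]inE.
by case/orP => [/eqP->|//]; exact: mem_head. Qed.

Section Res.
Variables (F : fieldType) (v : F -> int) (hv : is_dvaluation v) (k : fieldType)
  (r : F -> k) (hr : is_residue_map v r).

Lemma rD x y : vring v x -> vring v y -> r (x + y) = r x + r y.
Proof. by move: hr; rewrite /is_residue_map; case=> *; auto. Qed.
Lemma rM x y : vring v x -> vring v y -> r (x * y) = r x * r y.
Proof. by move: hr; rewrite /is_residue_map; case=> *; auto. Qed.
Lemma rE x : vring v x -> (r x == 0) = (x == 0) || (0 < v x).
Proof. by move: hr; rewrite /is_residue_map; case=> *; auto. Qed.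
Lemma rsurj y : exists x, vring v x /\ r x = y.
Proof. by move: hr; rewrite /is_residue_map; case=> *; auto. Qed.

Lemma r0 : r 0 = 0.
Proof. by apply/eqP; rewrite rE /vring ?eqxx. Qed.

Lemma r_neq0 x : x != 0 -> v x = 0 -> r x != 0.
Proof. by move=> hx h0; rewrite rE /vring ?h0 ?lexx ?orbT // (negbTE hx) ltxx. Qed.

Lemma r_eq0 x : 0 < v x -> r x = 0.
Proof. move=> h; apply/eqP; rewrite rE ?h ?orbT // /vring ltW ?orbT //. Qed.

Lemma vring_add x y : vring v x -> vring v y -> vring v (x + y).
Proof.
rewrite /vring; case: (eqVneq x 0) => [->|hx]; first by move=> _ h; rewrite add0r.
case: (eqVneq y 0) => [->|hy]; first by move=> h _; rewrite addr0 (negbTE hx).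
case: (eqVneq (x + y) 0) => [//|hxy] /= h1 h2.
by apply: le_trans (vD hv hx hy hxy); rewrite le_min h1 h2.
Qed.

Lemma r_sum (I : Type) (l : seq I) (P : pred I) (f : I -> F) :
  (forall i, P i -> vring v (f i)) ->
  r (\sum_(i <- l | P i) f i) = \sum_(i <- l | P i) r (f i).
Proof.
move=> h.
suff : vring v (\sum_(i <- l | P i) f i) /\ r (\sum_(i <- l | P i) f i) = \sum_(i <- l | P i) r (f i) by case.
apply: (big_ind2 (fun x y => vring v x /\ r x = y)).
- by rewrite /vring eqxx r0.
- by move=> x1 x2 y1 y2 [h1 <-] [h2 <-]; rewrite vring_add // rD.
- by move=> i Pi; split => //; exact: h.
Qed.

End Res.

Section WS.
Variables (F : fieldType) (s : nat) (hs : (0 < s)%N) (e : 'I_s -> nat) (v : 'I_s -> F -> int).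

Lemma wS_le i z : wS e v z <= wval (e i) (v i) z.
Proof. by apply: minl_le; apply: map_f; rewrite mem_enum. Qed.

Lemma wS_ex z : exists i, wS e v z = wval (e i) (v i) z.
Proof.
have hne : [seq wval (e i) (v i) z | i <- enum 'I_s] != [::].
  case: s hs e v => // s' _ e' v'; rewrite enum_ordSl //.
have /mapP[i _ hi] := minl_in hne; by exists i; rewrite /wS hi.
Qed.

Lemma wS_ge r z : (forall i, r <= wval (e i) (v i) z) -> r <= wS e v z.
Proof. by move=> h; have [i ->] := wS_ex z. Qed.

End WS.
Section Main.
Variables (K : fieldType) (L : fieldExtType K)
  (vp : K -> int) (hvp : is_dvaluation vp)
  (kp : fieldType) (resp : K -> kp) (hresp : is_residue_map vp resp)
  (pi : K) (hpi : pi != 0 /\ vp pi = 1)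
  (s : nat) (hs : (0 < s)%N)
  (e : 'I_s -> nat) (he : forall i, (0 < e i)%N)
  (v : 'I_s -> L -> int) (hv : forall i, is_dvaluation (v i))
  (hve : forall i (a : K), a != 0 -> v i (a%:A) = (e i)%:Z * vp a)
  (k : 'I_s -> fieldType) (res : forall i, L -> k i)
  (hres : forall i, is_residue_map (v i) (res i))
  (iota : forall i, kp -> k i)
  (hiota : forall i (a : K), vring vp a -> iota i (resp a) = res i (a%:A))
  (piP : 'I_s -> L) (hpiP : forall i, piP i != 0 /\ v i (piP i) = 1).

Definition c i (V : int) : L :=
  (pi%:A : L) ^ (- (V %/ (e i)%:Z)%Z) * piP i ^ (- (V %% (e i)%:Z)%Z).

Lemma pi_neq0 : pi != 0. Proof. by case: hpi. Qed.
Lemma vp_pi : vp pi = 1. Proof. by case: hpi. Qed.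
Lemma A_neq0 (a : K) : a != 0 -> (a%:A : L) != 0.
Proof. by move=> ha; rewrite scaler_eq0 negb_or ha oner_neq0. Qed.
Lemma piA_neq0 : (pi%:A : L) != 0. Proof. exact: A_neq0 pi_neq0. Qed.
Lemma piP_neq0 i : piP i != 0. Proof. by case: (hpiP i). Qed.
Lemma eZ_neq0 i : ((e i)%:Z != 0). Proof. by rewrite eqz_nat -lt0n he. Qed.
Lemma eR_neq0 i : ((e i)%:R : rat) != 0. Proof. by rewrite pnatr_eq0 -lt0n he. Qed.

Lemma c_neq0 i V : c i V != 0.
Proof. by rewrite mulf_neq0 // expfz_neq0 // ?piA_neq0 ?piP_neq0. Qed.

Lemma v_c i V : v i (c i V) = - V.
Proof.
rewrite /c vM ?expfz_neq0 ?piA_neq0 ?piP_neq0 // !vXz ?piA_neq0 ?piP_neq0 //.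
rewrite hve ?pi_neq0 // vp_pi mulr1 (proj2 (hpiP i)) mulr1.
by rewrite mulNr -opprD -divz_eq.
Qed.

Lemma c_shift i V t : c i (V + (e i)%:Z * t) = (pi%:A)^(-t) * c i V.
Proof.
rewrite /c (addrC V) (mulrC _ t) divzMDl ?eZ_neq0 // modzMDl.
by rewrite opprD expfzDr ?piA_neq0 // mulrA.
Qed.

Lemma vZ i (lam : K) z : lam != 0 -> z != 0 -> v i (lam *: z) = (e i)%:Z * vp lam + v i z.
Proof. by move=> hl hz; rewrite -mulr_algl vM ?A_neq0 // hve. Qed.

Lemma wvalZ i (lam : K) z : lam != 0 -> z != 0 ->
  wval (e i) (v i) (lam *: z) = (vp lam)%:~R + wval (e i) (v i) z.
Proof.
move=> hl hz; rewrite /wval vZ // intrD intrM mulrDl; congr (_ + _).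
by rewrite -mulrA mulrC -mulrA mulVf ?eR_neq0 ?mulr1.
Qed.

Lemma wSZ (lam : K) z : lam != 0 -> z != 0 ->
  wS e v (lam *: z) = (vp lam)%:~R + wS e v z.
Proof.
move=> hl hz; apply/eqP; rewrite eq_le; apply/andP; split.
  have [i ->] := wS_ex hs e v z; rewrite -wvalZ //; exact: wS_le.
have [i ->] := wS_ex hs e v (lam *: z); rewrite wvalZ // lerD2l; exact: wS_le.
Qed.


Definition red i (r : rat) (z : L) := redP (res i) (e i) (v i) pi (piP i) r z.

Lemma vp_unit (lam : K) : lam != 0 -> vp (lam * pi ^ (- vp lam)) = 0.
Proof.
move=> hl; rewrite vM // ?expfz_neq0 ?pi_neq0 // vXz ?pi_neq0 // vp_pi mulr1.
by rewrite subrr.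
Qed.

Lemma unit_neq0 (lam : K) : lam != 0 -> lam * pi ^ (- vp lam) != 0.
Proof. by move=> hl; rewrite mulf_neq0 // expfz_neq0 // pi_neq0. Qed.

Lemma wval_inj i (x y : int) : x%:~R / ((e i)%:R : rat) = y%:~R / (e i)%:R -> x = y.
Proof. by move/(mulIf (invr_neq0 (eR_neq0 i)))/eqP; rewrite eqr_int => /eqP. Qed.

Lemma wval_ltE i (x y : int) : (x%:~R / ((e i)%:R : rat) < y%:~R / (e i)%:R) = (x < y).
Proof. by rewrite ltr_pM2r ?ltr_int // invr_gt0 ltr0n he. Qed.

Lemma term i z (lam : K) V m : z != 0 -> lam != 0 ->
  (vp lam)%:~R + wS e v z = m -> V%:~R / ((e i)%:R : rat) = m ->
  res i (lam *: z * c i V) = iota i (resp (lam * pi ^ (- vp lam))) * red i (wS e v z) z.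
Proof.
move=> hz hl hm hV.
have hu := unit_neq0 hl; have hvu := vp_unit hl.
have hvlz : v i (lam *: z) = (e i)%:Z * vp lam + v i z by rewrite vZ.
have hwlz : wval (e i) (v i) (lam *: z) = (vp lam)%:~R + wval (e i) (v i) z by rewrite wvalZ.
case: (eqVneq (wval (e i) (v i) z) (wS e v z)) => hw.
- have hr : red i (wS e v z) z = res i (z * c i (v i z)).
    by rewrite /red /redP hz hw eqxx /= /c mulrA.
  have hVe : V = v i z + (e i)%:Z * vp lam.
    apply: (@wval_inj i); rewrite hV -hm -hw -hwlz /wval hvlz addrC //.
  rewrite hr hVe c_shift.
  have -> : lam *: z * ((pi%:A) ^ (- vp lam) * c i (v i z)) =
            (lam * pi ^ (- vp lam))%:A * (z * c i (v i z)).
    rewrite -[lam *: z]mulr_algl -!(in_algE L) rmorphM fmorphXz /=.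
    by rewrite -!mulrA; congr (_ * _); rewrite mulrCA.
  have hw1 : vring (v i) ((lam * pi ^ (- vp lam))%:A).
    by rewrite /vring hve // hvu mulr0 lexx orbT.
  have hw2 : vring (v i) (z * c i (v i z)).
    by rewrite /vring vM ?c_neq0 // v_c subrr lexx orbT.
  rewrite [LHS](rM (hres i)) // hiota //.
  by rewrite /vring hvu lexx orbT.
- have hr : red i (wS e v z) z = 0.
    by rewrite /red /redP hz (negbTE hw).
  rewrite hr mulr0; apply: (r_eq0 (hres i)).
  have hlz : lam *: z != 0 by rewrite scaler_eq0 negb_or hl hz.
  rewrite vM ?c_neq0 // v_c subr_gt0 -(wval_ltE i) hV -hm -/(wval (e i) (v i) (lam *: z)) hwlz.
  rewrite ltrD2l lt_neqAle eq_sym hw /=; exact: wS_le.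
Qed.


Lemma iota0 i : iota i 0 = 0.
Proof.
have h := @hiota i 0; rewrite (r0 hresp) in h; rewrite h ?scale0r ?(r0 (hres i)) //.
by rewrite /vring eqxx.
Qed.

Lemma red_neq0 i r z : red i r z != 0 -> z != 0 /\ wval (e i) (v i) z = r.
Proof. by rewrite /red /redP; case: ifP => [/andP[hz /eqP hw] _|_]; rewrite ?eqxx. Qed.

Lemma vring_geW i m x0 z : x0 != 0 -> wval (e i) (v i) x0 = m -> geW (v i) (e i) m z ->
  vring (v i) (z * c i (v i x0)).
Proof.
move=> hx0 hm; rewrite /geW /vring; case: (eqVneq z 0) => [->|hz] /=; first by rewrite mul0r eqxx.
rewrite -hm (wval_le _ (he i)) => h; rewrite vM ?c_neq0 // v_c subr_ge0 h orbT //.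
Qed.

Lemma res_gtW i m x0 z : x0 != 0 -> wval (e i) (v i) x0 = m -> gtW (v i) (e i) m z ->
  res i (z * c i (v i x0)) = 0.
Proof.
move=> hx0 hm; rewrite /gtW; case: (eqVneq z 0) => [->|hz] /=; first by rewrite mul0r (r0 (hres i)).
rewrite -hm (wval_lt _ (he i)) => h; apply: (r_eq0 (hres i)); rewrite vM ?c_neq0 // v_c subr_gt0 //.
Qed.


Lemma resp_unit (a : K) : vring vp a -> resp a != 0 -> a != 0 /\ vp a = 0.
Proof.
move=> ha; rewrite (rE hresp ha) negb_or => /andP[hz hlt]; split=> //.
by move: ha; rewrite /vring (negbTE hz) /= => h; apply/eqP; rewrite eq_le h andbT leNgt.
Qed.

Lemma dir1 n (b : 'I_n -> L) (hb : forall j, b j != 0) :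
  w_reduced (wS e v) b ->
  forall j0 : 'I_n,
     prod_lin_indep iota
       (fun j => (wS e v (b j) - wS e v (b j0)) \is a Num.int)
       (fun j i => red i (wS e v (b j)) (b j)).
Proof.
move=> H j0 mu hrel j1 hj1; apply/eqP/negPn/negP => hmu1.
set J := fun j => (wS e v (b j) - wS e v (b j0)) \is a Num.int.
have exa : forall y, exists x, vring vp x && (resp x == y).
  by move=> y; have [x [h1 h2]] := rsurj hresp y; exists x; rewrite h1 h2 eqxx.
pose a j := xchoose (exa (mu j)).
have ha j : vring vp (a j) /\ resp (a j) = mu j.
  by have /andP[h1 /eqP h2] := xchooseP (exa (mu j)).
pose t j := Num.floor (wS e v (b j) - wS e v (b j0)).
have ht j : J j -> (t j)%:~R = wS e v (b j) - wS e v (b j0) by move=> hj; rewrite /t floorK.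
pose lam j := if J j && (mu j != 0) then a j * pi ^ (- t j) else 0.
set m := wS e v (b j0).
have hlam j : J j -> mu j != 0 ->
   [/\ lam j != 0, vp (lam j) = - t j, wS e v (lam j *: b j) = m &
       resp (lam j * pi ^ (- vp (lam j))) = mu j].
  move=> hj hmu; have [ha1 ha2] := ha j.
  have [hna hva] : a j != 0 /\ vp (a j) = 0 by apply: resp_unit => //; rewrite ha2.
  have hl : lam j != 0 by rewrite /lam hj hmu /= mulf_neq0 // expfz_neq0 // pi_neq0.
  have hvl : vp (lam j) = - t j.
    by rewrite /lam hj hmu /= vM // ?expfz_neq0 ?pi_neq0 // vXz ?pi_neq0 // vp_pi mulr1 hva add0r.
  split=> //.
    by rewrite wSZ // hvl intrN ht // opprB subrK.
  rewrite hvl opprK /lam hj hmu /= -mulrA -expfzDr ?pi_neq0 // addNr expr0z mulr1.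
  by rewrite ha2.
have hlam0 j : ~~ (J j && (mu j != 0)) -> lam j = 0 by rewrite /lam => /negbTE ->.
have hJ1 : J j1 := hj1.
have [hl1 _ _ _] := hlam j1 hJ1 hmu1.
have [hsum0 hsum] := H lam (ex_intro _ j1 hl1).
set S := \sum_(j < n) lam j *: b j in hsum0 hsum.
have hminl : minl [seq wS e v (lam j *: b j) | j <- enum 'I_n & lam j != 0] = m.
  have hne : [seq wS e v (lam j *: b j) | j <- enum 'I_n & lam j != 0] != [::].
    apply/eqP => h0; have : wS e v (lam j1 *: b j1) \in [::] by rewrite -h0; apply: map_f; rewrite mem_filter hl1 mem_enum.
    by rewrite in_nil.
  have /mapP[j2] := minl_in hne; rewrite mem_filter => /andP[hl2 _] ->.
  case hj2 : (J j2 && (mu j2 != 0)); last by move: hl2; rewrite hlam0 ?hj2 ?eqxx.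
  by move/andP: hj2 => [h1 h2]; have [] := hlam j2 h1 h2.
rewrite hminl in hsum.
have [i hi] := wS_ex hs e v S.
have hwi : wval (e i) (v i) S = m by rewrite -hi.
set V := v i S.
have hne : res i (S * c i V) != 0.
  apply: (r_neq0 (hres i)); first by rewrite mulf_neq0 ?c_neq0.
  by rewrite vM ?c_neq0 // v_c subrr.
have hterm j : lam j != 0 -> geW (v i) (e i) m (lam j *: b j).
  move=> hl; rewrite /geW; apply/orP; right.
  case hj : (J j && (mu j != 0)); last by move: hl; rewrite hlam0 ?hj ?eqxx.
  move/andP: hj => [h1 h2]; have [_ _ <- _] := hlam j h1 h2; exact: wS_le.
have : res i (S * c i V) = 0.
  rewrite /S mulr_suml (r_sum (hv i) (hres i)); last first.
    move=> j _; case: (eqVneq (lam j) 0) => [->|hl]; first by rewrite scale0r mul0r /vring eqxx.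
    exact: (vring_geW hsum0 hwi (hterm j hl)).
  rewrite -[RHS](hrel i) [RHS]big_mkcond /=; apply: eq_bigr => j _.
  case hj : (J j && (mu j != 0)).
    move/andP: hj => [h1 h2]; have [hl hvl hw hr] := hlam j h1 h2.
    rewrite /J in h1; rewrite h1 -hr; apply: (term (m := m)) => //.
      by rewrite -wSZ.
  rewrite hlam0 ?hj // scale0r mul0r (r0 (hres i)).
  case: ifP => // hJ; move: hj; rewrite /J hJ /= => /negbT; rewrite negbK => /eqP ->.
  by rewrite iota0 mul0r.
by move/eqP; rewrite (negbTE hne).
Qed.


Lemma dir2 n (b : 'I_n -> L) (hb : forall j, b j != 0) :
  (forall j0 : 'I_n,
     prod_lin_indep iota
       (fun j => (wS e v (b j) - wS e v (b j0)) \is a Num.int)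
       (fun j i => red i (wS e v (b j)) (b j))) ->
  w_reduced (wS e v) b.
Proof.
move=> H lam [j1 hj1].
set l := [seq wS e v (lam j *: b j) | j <- enum 'I_n & lam j != 0].
have hne : l != [::].
  apply/eqP => h0; have : wS e v (lam j1 *: b j1) \in [::].
    by rewrite -h0; apply: map_f; rewrite mem_filter hj1 mem_enum.
  by rewrite in_nil.
set m := minl l.
have hge j : lam j != 0 -> m <= wS e v (lam j *: b j).
  by move=> hl; apply: minl_le; apply: map_f; rewrite mem_filter hl mem_enum.
have [j0 hl0 hm0] : exists2 j0, lam j0 != 0 & wS e v (lam j0 *: b j0) = m.
  have /mapP[j0] := minl_in hne; rewrite mem_filter => /andP[hl0 _] hm.
  by exists j0; rewrite -?hm.
pose J' j := (lam j != 0) && (wS e v (lam j *: b j) == m).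
pose mu j := if J' j then resp (lam j * pi ^ (- vp (lam j))) else 0.
set J := fun j => (wS e v (b j) - wS e v (b j0)) \is a Num.int.
have hJ'J j : J' j -> J j.
  case/andP => hl /eqP hw; rewrite /J.
  have -> : wS e v (b j) - wS e v (b j0) = (vp (lam j0) - vp (lam j))%:~R.
    move: hw; rewrite -hm0 !wSZ // intrB => hw.
    lra.
  exact: intr_int.
have hmu0 : mu j0 != 0.
  rewrite /mu /J' hl0 hm0 eqxx /=; apply: (r_neq0 hresp); [exact: unit_neq0 | exact: vp_unit].
have [i hi] : exists i, \sum_(j < n | J j) iota i (mu j) * red i (wS e v (b j)) (b j) != 0.
  case: (boolP [exists i, \sum_(j < n | J j) iota i (mu j) * red i (wS e v (b j)) (b j) != 0]).
    by move/existsP.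
  rewrite negb_exists => /forallP hall.
  have h : forall j, J j -> mu j = 0.
    by apply: (H j0 mu) => i; apply/eqP; move: (hall i); rewrite negbK.
  by exfalso; move: hmu0; rewrite h ?eqxx // /J subrr rpred0.
have [j2 hJ2 hne2] : exists2 j2, J j2 & iota i (mu j2) * red i (wS e v (b j2)) (b j2) != 0.
  case: (boolP [exists j, J j && (iota i (mu j) * red i (wS e v (b j)) (b j) != 0)]).
    by move/existsP => [j /andP[h1 h2]]; exists j.
  rewrite negb_exists => /forallP hall; exfalso; move/eqP: hi; apply.
  apply: big1 => j hj; move: (hall j); rewrite hj /= negbK => /eqP.
  by [].
move: hne2; rewrite mulf_eq0 negb_or => /andP[hmu2 hred2].
have hJ'2 : J' j2.
  by move: hmu2; rewrite /mu; case: (J' j2) => //; rewrite iota0 eqxx.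
have [_ hw2] := red_neq0 hred2.
move/andP: (hJ'2) => [hl2 /eqP hwl2].
set x0 := lam j2 *: b j2.
have hx0 : x0 != 0 by rewrite scaler_eq0 negb_or hl2 hb.
have hwx0 : wval (e i) (v i) x0 = m by rewrite wvalZ // hw2 -wSZ.
set V := v i x0.
pose S' := \sum_(j < n) (if J' j then lam j *: b j else 0).
pose T := \sum_(j < n) (if J' j then 0 else lam j *: b j).
have hsplit : \sum_(j < n) lam j *: b j = S' + T.
  rewrite /S' /T -big_split /=; apply: eq_bigr => j _; case: (J' j); by rewrite ?addr0 ?add0r.
have hgeW k0 j : geW (v k0) (e k0) m (lam j *: b j).
  rewrite /geW; case: (eqVneq (lam j) 0) => [->|hl]; first by rewrite scale0r eqxx.
  by apply/orP; right; apply: le_trans (hge j hl) _; exact: wS_le.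
have hgeS' : geW (v i) (e i) m S'.
  apply: (geW_sum (hv i) (he i)) => j _; case: (J' j); [exact: hgeW | by rewrite /geW eqxx].
have hgtT : gtW (v i) (e i) m T.
  apply: (gtW_sum (hv i) (he i)) => j _; case hj : (J' j); first by rewrite /gtW eqxx.
  rewrite /gtW; case: (eqVneq (lam j) 0) => [->|hl]; first by rewrite scale0r eqxx.
  apply/orP; right; apply: lt_le_trans (wS_le _ _ i _).
  rewrite lt_neqAle hge // andbT; move: hj; rewrite /J' hl /= eq_sym => /negbT //.
have hres' : res i (S' * c i V) =
    \sum_(j < n | J j) iota i (mu j) * red i (wS e v (b j)) (b j).
  rewrite /S' mulr_suml (r_sum (hv i) (hres i)); last first.
    move=> j _; case: (J' j); last by rewrite mul0r /vring eqxx.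
    exact: (vring_geW hx0 hwx0 (hgeW i j)).
  rewrite [RHS]big_mkcond /=; apply: eq_bigr => j _.
  case hj : (J' j).
    rewrite (hJ'J j hj) /mu hj; move/andP: hj => [hl /eqP hw].
    apply: (term (m := m)) => //; first by rewrite -wSZ.
  rewrite mul0r (r0 (hres i)); case: ifP => // _.
  by rewrite /mu hj iota0 mul0r.
have hS'0 : S' != 0.
  by apply/eqP => h0; move: hi; rewrite -hres' h0 mul0r (r0 (hres i)) eqxx.
have hwS' : wval (e i) (v i) S' = m.
  have hvr := vring_geW hx0 hwx0 hgeS'.
  move: hi; rewrite -hres' (rE (hres i) hvr) negb_or => /andP[_].
  move: hvr; rewrite /vring mulf_eq0 (negbTE hS'0) (negbTE (c_neq0 _ _)) /= vM ?c_neq0 // v_c => h1 h2.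
  have hV : v i S' = V.
    apply/eqP; rewrite eq_le; apply/andP; split.
      by move: h2; rewrite -leNgt subr_le0.
    by move: h1; rewrite subr_ge0.
  by rewrite -hwx0 /wval hV.
have [hsum0 hsumw] := wval_dom (hv i) (he i) hS'0 hwS' hgtT.
rewrite hsplit; split => //.
apply/eqP; rewrite eq_le; apply/andP; split.
  by rewrite -hsumw; exact: wS_le.
apply: wS_ge => // k0.
have hg : geW (v k0) (e k0) m (\sum_(j < n) lam j *: b j).
  by apply: (geW_sum (hv k0) (he k0)) => j _; exact: hgeW.
by move: hg; rewrite hsplit /geW (negbTE hsum0).
Qed.

End Main.

Theorem mainTheorem6
  (K : fieldType) (L : fieldExtType K)
  (f : {poly K}) (theta : L)
  (hf_monic : f \is monic) (hf_irr : irreducible_poly f)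
  (hf_sep : separable_poly f)
  (htheta : root (map_poly (in_alg L) f) theta)
  (hL : <<1%VS; theta>>%VS = fullv)
  (vp : K -> int) (hvp : is_dvaluation vp)
  (kp : fieldType) (resp : K -> kp) (hresp : is_residue_map vp resp)
  (pi : K) (hpi : pi != 0 /\ vp pi = 1)
  (s : nat) (hs : (0 < s)%N)
  (e : 'I_s -> nat) (he : forall i, (0 < e i)%N)
  (v : 'I_s -> L -> int) (hv : forall i, is_dvaluation (v i))
  (hve : forall i (a : K), a != 0 -> v i (a%:A) = (e i)%:Z * vp a)
  (hdist : forall i j, i != j -> exists z : L, z != 0 /\ v i z != v j z)
  (hall : forall u : L -> int, is_dvaluation u ->
     (exists e0 : nat, (0 < e0)%N /\
        forall a : K, a != 0 -> u (a%:A) = e0%:Z * vp a) ->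
     exists i, forall z : L, z != 0 -> u z = v i z)
  (k : 'I_s -> fieldType) (res : forall i, L -> k i)
  (hres : forall i, is_residue_map (v i) (res i))
  (iota : forall i, kp -> k i)
  (hiota : forall i (a : K), vring vp a -> iota i (resp a) = res i (a%:A))
  (piP : 'I_s -> L) (hpiP : forall i, piP i != 0 /\ v i (piP i) = 1)
  (n : nat) (b : 'I_n -> L) (hb : forall j, b j != 0) :
  w_reduced (wS e v) b <->
  (forall j0 : 'I_n,
     prod_lin_indep iota
       (fun j => (wS e v (b j) - wS e v (b j0)) \is a Num.int)
       (fun j i => redP (res i) (e i) (v i) pi (piP i) (wS e v (b j)) (b j))).
Proof.
split.
- move=> H j0 mu hrel j hj.
  have := @dir1 K L vp hvp kp resp hresp pi hpi s hs e he v hv hve k res hres iota hiota piP hpiP n b hb H j0 mu.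
  move=> /(_ hrel j hj). done.
- move=> H.
  apply: (@dir2 K L vp hvp kp resp hresp pi hpi s hs e he v hv hve k res hres iota hiota piP hpiP n b hb).
  exact: H.
Qed.
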